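(* Let $(G,t)$ be an infinite biosphere. Then: (1) $\mathrm{CONV}$ is downward generic; (2) $\mathrm{CONV}\cap\mathrm{REF}$ is downward generic; (3) $\mathrm{IAP}$ is downward generic.
   Context: An infinite biosphere is a directed graph $G$ together with a function $t$ assigning a real number $t(v)$ to each vertex, such that: (1) if $v$ is a parent of $w$ (edge from $v$ to $w$) then $t(v)<t(w)$; (2) for every $r\in\mathbb R$ at most finitely many vertices $v$ have $t(v)<r$; (3) every vertex has finitely many children; (4) $G$ is infinite. $v$ is an ancestor of $w$ (and $w$ a descendant of $v$) if there is a directed path $v=v_1,\dots,v_n=w$ with $n>1$. A $G$-subset is a set of vertices. $\mathrm{IAP}$ is the set of $G$-subsets $S$ such that no $v\in S$ has both infinitely many descendants in $S$ and infinitely many non-descendants in $S$. $\mathrm{CONV}$ is the set of $G$-subsets $S$ such that every $v\in G$ having an ancestor in $S$ and a descendant in $S$ lies in $S$. $\mathrm{REF}$ is the set of $G$-subsets $S$ such that every $v\in S$ which has infinitely many descendants in $G$ has infinitely many descendants in $S$. For a nonempty linear order $(X,<)$, a descending chain of $G$-subsets indexed by $X$ is a family $\{C_\alpha\}_{\alpha\in X}$ with $C_\beta\subseteq C_\alpha$ whenever $\alpha<\beta$. A set $T$ of $G$-subsets is downward generic if for every descending chain $\{C_\alpha\}_{\alpha\in X}$ of nonempty $G$-subsets with each $C_\alpha\in T$, $\bigcap_\alpha C_\alpha\in T$. *)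

(* Defs.v *)
From Stdlib Require Import Reals List Relations.
Open Scope R_scope.

Definition finite_pred {V : Type} (P : V -> Prop) : Prop :=
  exists l : list V, forall v, P v -> In v l.

Definition infinite_pred {V : Type} (P : V -> Prop) : Prop := ~ finite_pred P.

Definition ancestor {V : Type} (E : V -> V -> Prop) : V -> V -> Prop :=
  clos_trans V E.

(* (V, E) is a directed graph (E v w : edge from parent v to child w). *)
Definition infinite_biosphere (V : Type) (E : V -> V -> Prop) (t : V -> R) : Prop :=
  (forall v w, E v w -> t v < t w) /\
  (forall r : R, finite_pred (fun v => t v < r)) /\
  (forall v, finite_pred (fun w => E v w)) /\
  infinite_pred (fun _ : V => True).

Definition IAP {V : Type} (E : V -> V -> Prop) (S : V -> Prop) : Prop :=
  forall v, S v ->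
    ~ (infinite_pred (fun w => S w /\ ancestor E v w) /\
       infinite_pred (fun w => S w /\ ~ ancestor E v w)).

Definition CONV {V : Type} (E : V -> V -> Prop) (S : V -> Prop) : Prop :=
  forall v, (exists a, S a /\ ancestor E a v) -> (exists d, S d /\ ancestor E v d) -> S v.

Definition REF {V : Type} (E : V -> V -> Prop) (S : V -> Prop) : Prop :=
  forall v, S v -> infinite_pred (fun w => ancestor E v w) ->
    infinite_pred (fun w => S w /\ ancestor E v w).

Definition strict_linear_order {X : Type} (lt : X -> X -> Prop) : Prop :=
  (forall x, ~ lt x x) /\
  (forall x y z, lt x y -> lt y z -> lt x z) /\
  (forall x y, lt x y \/ x = y \/ lt y x).

Definition downward_generic {V : Type} (T : (V -> Prop) -> Prop) : Prop :=
  forall (X : Type) (lt : X -> X -> Prop) (C : X -> V -> Prop),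
    strict_linear_order lt ->
    (exists x : X, True) ->
    (forall a b, lt a b -> forall v, C b v -> C a v) ->
    (forall a, exists v, C a v) ->
    (forall a, T (C a)) ->
    T (fun v => forall a, C a v).

(* Main.v *)
Require Import Defs.
From Stdlib Require Import Reals.
From Stdlib Require Import List Relations Classical Lra Lia.

Section Aux.
Context {V : Type} (E : V -> V -> Prop).

Lemma infinite_mono (P Q : V -> Prop) :
  (forall w, P w -> Q w) -> infinite_pred P -> infinite_pred Q.
Proof. intros H HP [l Hl]. apply HP. exists l. intros v Hv. apply Hl, H, Hv. Qed.

Lemma infinite_nonempty (P : V -> Prop) : infinite_pred P -> exists w, P w.
Proof.
  intros H. apply NNPP. intros N. apply H. exists nil. intros v Hv. apply N. eauto.
Qed.

Lemma anc_split v w : ancestor E v w -> E v w \/ exists c, E v c /\ ancestor E c w.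
Proof.
  unfold ancestor. induction 1 as [x y H|x y z H1 IH1 H2 IH2].
  - left; exact H.
  - right. destruct IH1 as [H|[c [Hc Hc2]]].
    + exists y; split; assumption.
    + exists c; split; [assumption|]. eapply t_trans; eassumption.
Qed.

Lemma anc_t (t : V -> R) : (forall v w, E v w -> (t v < t w)%R) ->
  forall a b, ancestor E a b -> (t a < t b)%R.
Proof. intros Ht a b H. induction H; [apply Ht; auto| lra]. Qed.

Lemma finite_union (Q : V -> V -> Prop) (ch : list V) :
  (forall c, In c ch -> finite_pred (Q c)) ->
  finite_pred (fun w => exists c, In c ch /\ Q c w).
Proof.
  induction ch as [|a ch IH]; intros H.
  - exists nil. intros v [c [[] _]].
  - destruct (H a (or_introl eq_refl)) as [la Hla].
    destruct IH as [l Hl]. { intros c Hc. apply H; right; exact Hc. }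
    exists (la ++ l). intros v [c [[<-|Hc] Hq]]; apply in_or_app.
    + left; apply Hla; exact Hq.
    + right; apply Hl; eauto.
Qed.

Lemma chain_avoid {X : Type} (lt : X -> X -> Prop) (K : X -> V -> Prop) (x0 : X) :
  strict_linear_order lt -> (forall a b, lt a b -> forall v, K b v -> K a v) ->
  forall ch, (forall c, In c ch -> exists a, ~ K a c) ->
  exists b, forall c, In c ch -> ~ K b c.
Proof.
  intros [_ [_ Htri]] Hm ch. induction ch as [|a ch IH]; intros H.
  - exists x0. intros c [].
  - destruct IH as [b Hb]. { intros c Hc; apply H; right; exact Hc. }
    destruct (H a (or_introl eq_refl)) as [al Hal].
    destruct (Htri b al) as [Hl|[Heq|Hl]].
    + exists al. intros c [<-|Hc]; [exact Hal|]. intros Hk. apply (Hb c Hc).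
      eapply Hm; eauto.
    + subst. exists al. intros c [<-|Hc]; auto.
    + exists b. intros c [<-|Hc]; [|auto]. intros Hk. apply Hal. eapply Hm; eauto.
Qed.

End Aux.

Theorem mainTheorem6 (V : Type) (E : V -> V -> Prop) (t : V -> R) :
  infinite_biosphere V E t ->
  downward_generic (CONV E) /\
  downward_generic (fun S => CONV E S /\ REF E S) /\
  downward_generic (IAP E).
Proof.
  intros [Ht [_ [Hch _]]].
  assert (Hconv : downward_generic (CONV E)).
  { intros X lt C _ _ _ _ HT v [a [Ha Hav]] [d [Hd Hvd]] x.
    apply (HT x v); eauto. }
  split; [exact Hconv|split].
  - intros X lt C Hlin [x0 _] Hmon Hne HT. split.
    + apply (Hconv X lt C Hlin (ex_intro _ x0 I) Hmon Hne). intros a; apply HT.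
    + set (Cap := fun v => forall a, C a v).
      set (P := fun v => Cap v /\ infinite_pred (ancestor E v)).
      assert (Hstep : forall v, P v -> exists c, E v c /\ P c).
      { intros v [Hcv Hinf]. destruct (Hch v) as [ch Hchl].
        set (K := fun a c => E v c /\ infinite_pred (fun w => C a w /\ ancestor E c w)).
        assert (Hcl : forall a, exists c, In c ch /\ K a c).
        { intros a. apply NNPP. intros N.
          destruct (HT a) as [_ Href].
          pose proof (Href v (Hcv a) Hinf) as Hi.
          destruct (finite_union (fun c w => E v c /\ C a w /\ ancestor E c w) ch)
            as [L HL].
          { intros c Hc. destruct (classic (E v c)) as [Hvc|Hvc].
            - assert (Hf : finite_pred (fun w => C a w /\ ancestor E c w)).
              { apply NNPP. intros Hf. apply N. exists c. split; [exact Hc|split; assumption]. }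
              destruct Hf as [l Hl]. exists l. intros w [_ Hw]. apply Hl, Hw.
            - exists nil. intros w [Hw _]. contradiction. }
          apply Hi. exists (ch ++ L). intros w [Haw Hvw]. apply in_or_app.
          destruct (anc_split E v w Hvw) as [He|[c [Hc1 Hc2]]].
          - left; apply Hchl, He.
          - right; apply HL. exists c. repeat split; auto. }
        assert (Hmk : forall a b, lt a b -> forall c, K b c -> K a c).
        { intros a b Hab c [Hvc Hi]. split; [exact Hvc|].
          eapply infinite_mono; [|exact Hi]. intros w [Hw1 Hw2]. split; [|exact Hw2].
          eapply Hmon; eauto. }
        destruct (classic (exists c, In c ch /\ forall a, K a c)) as [[c [Hc HK]]|Hno].
        - exists c. destruct (HK x0) as [Hvc Hi0]. split; [exact Hvc|split].
          + intros a. destruct (HK a) as [_ Hia].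
            destruct (infinite_nonempty _ Hia) as [w [Hw1 Hw2]].
            destruct (HT a) as [Hca _]. apply Hca.
            * exists v. split; [apply Hcv|]. apply t_step; exact Hvc.
            * exists w; split; assumption.
          + eapply infinite_mono; [|exact Hi0]. intros w [_ H]; exact H.
        - destruct (chain_avoid lt K x0 Hlin Hmk ch) as [b Hb].
          { intros c Hc. apply NNPP. intros N. apply Hno. exists c. split; [exact Hc|].
            intros a. apply NNPP. intros N2. apply N. exists a. exact N2. }
          destruct (Hcl b) as [c [Hc Hk]]. exfalso; exact (Hb c Hc Hk). }
      assert (Hcount : forall n v, P v -> exists L, length L = n /\ NoDup L /\
                 forall x, In x L -> Cap x /\ ancestor E v x).
      { induction n as [|n IH]; intros v Hv.
        - exists nil. split; [reflexivity|split; [constructor|intros x []]].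
        - destruct (Hstep v Hv) as [c [Hvc Hc]]. destruct (IH c Hc) as [L [HL1 [HL2 HL3]]].
          exists (c :: L). split; [simpl; lia|split].
          + constructor; [|exact HL2]. intros Hin. destruct (HL3 c Hin) as [_ Hcc].
            pose proof (anc_t E t Ht c c Hcc). lra.
          + intros x [<-|Hx].
            * split; [apply Hc|]. apply t_step; exact Hvc.
            * destruct (HL3 x Hx) as [H1 H2]. split; [exact H1|].
              eapply t_trans; [apply t_step; exact Hvc| exact H2]. }
      intros v Hv Hinf [l Hl].
      destruct (Hcount (S (length l)) v (conj Hv Hinf)) as [L [HL1 [HL2 HL3]]].
      assert (Hinc : incl L l).
      { intros x Hx. apply Hl. exact (HL3 x Hx). }
      pose proof (NoDup_incl_length HL2 Hinc). lia.
  - intros X lt C Hlin [x0 _] Hmon Hne HT v Hv [H1 H2].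
    apply (HT x0 v (Hv x0)). split.
    + eapply infinite_mono; [|exact H1]. intros w [Hw Hw2]; split; auto.
    + eapply infinite_mono; [|exact H2]. intros w [Hw Hw2]; split; auto.
Qed.
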